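(* Let $G$ be a network with two source nodes $s_x,s_y$ and terminal set $\mathcal T$, and let $(X,Y)\sim p_{X,Y}$ be generated i.i.d. at $s_x,s_y$. If $H(K_{X,Y})=I(X;Y)$, then whenever the multicast problem $(G,p_{X,Y})$ is feasible (i.e. $H(X\mid Y)\le\rho_G(s_x)$, $H(Y\mid X)\le\rho_G(s_y)$, $H(X,Y)\le\rho_G(s_x,s_y)$), it is feasible by source decomposition.
   Context: A network is an acyclic directed graph with integer edge capacities and a set of terminals $\mathcal T$; $\rho(A;t)$ is the min-cut value from node set $A$ to terminal $t$, and $\rho_G(s_x)=\min_{t}\rho(s_x;t)$, $\rho_G(s_y)=\min_t\rho(s_y;t)$, $\rho_G(s_x,s_y)=\min_t\rho(\{s_x,s_y\};t)$. Every terminal must recover both $X$ and $Y$. $K_{X,Y}$ is the Gács–Körner common information: the index of the connected component containing $(X,Y)$ of the bipartite graph on $\mathcal X\cup\mathcal Y$ with an edge $x$–$y$ iff $p_{X,Y}(x,y)>0$. Source decomposition writes $X\leftrightarrow (X',K_{X,Y})$, $Y\leftrightarrow(Y',K_{X,Y})$ bijectively ($X'$ = index of $X$'s value within its component). Feasible by source decomposition means: in the expanded network obtained by adding nodes $s_{X'},s_{Y'},s_K$ with infinite-capacity edges $s_{X'}\to s_x$, $s_{Y'}\to s_y$, $s_K\to s_x$, $s_K\to s_y$, multicasting independent sources at $s_{X'},s_{Y'},s_K$ with rates $H(X\mid K_{X,Y}),H(Y\mid K_{X,Y}),H(K_{X,Y})$ to all terminals is feasible, i.e. for every nonempty subset $S$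 of these three nodes the sum of their rates is at most the minimum over terminals of the min-cut from $S$ in the expanded network. *)

(* Defs.v *)
From HB Require Import structures.
From mathcomp Require Import all_boot all_order all_algebra.
From mathcomp Require Import boolp classical_sets reals constructive_ereal ereal exp.
Set Implicit Arguments. Unset Strict Implicit. Unset Printing Implicit Defensive.
Import Order.TTheory GRing.Theory Num.Theory.
Local Open Scope classical_set_scope.
Local Open Scope ring_scope.

(* A network on node type V: capacity c u v (0 = no edge u -> v). *)
Definition edge_rel (V : finType) (c : V -> V -> nat) : rel V :=
  fun u v => (0 < c u v)%N.

Definition acyclic (V : finType) (c : V -> V -> nat) : Prop :=
  forall u v : V, (0 < c u v)%N -> ~~ connect (edge_rel c) v u.

Definition cut_value (R : realType) (W : finType) (c : W -> W -> \bar R)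
    (S : {set W}) : \bar R :=
  (\sum_(u in S) \sum_(v in ~: S) c u v)%E.

(* Min-cut value from node set A to node t (+oo if no cut exists). *)
Definition mincut (R : realType) (W : finType) (c : W -> W -> \bar R)
    (A : {set W}) (t : W) : \bar R :=
  ereal_inf [set cut_value c S | S in [set S : {set W} | (A \subset S) && (t \notin S)]].

Definition ecap (R : realType) (V : finType) (c : V -> V -> nat) : V -> V -> \bar R :=
  fun u v => ((c u v)%:R)%:E.

Definition rho (R : realType) (V : finType) (c : V -> V -> nat)
    (A : {set V}) (t : V) : \bar R := mincut (ecap R c) A t.

Definition rhoG (R : realType) (V : finType) (c : V -> V -> nat)
    (T : {set V}) (A : {set V}) : \bar R :=
  ereal_inf [set rho R c A t | t in [set t | t \in T]].

(* Nodes: V + 'I_3, with inr 0 = s_{X'}, inr 1 = s_{Y'}, inr 2 = s_K. *)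
Definition iX' : 'I_3 := @Ordinal 3 0 isT.
Definition iY' : 'I_3 := @Ordinal 3 1 isT.
Definition iK  : 'I_3 := @Ordinal 3 2 isT.

Definition exp_cap (R : realType) (V : finType) (c : V -> V -> nat) (sx sy : V)
    : V + 'I_3 -> V + 'I_3 -> \bar R :=
  fun a b =>
    match a, b with
    | inl u, inl v => ((c u v)%:R)%:E
    | inr i, inl v =>
        if ((i == iX') && (v == sx)) || ((i == iY') && (v == sy))
           || ((i == iK) && ((v == sx) || (v == sy)))
        then +oo%E else 0%E
    | _, _ => 0%E
    end.

Definition log2 (R : realType) (x : R) : R := ln x / ln 2.

Definition entropy (R : realType) (B : finType) (q : B -> R) : R :=
  - \sum_(b : B) q b * log2 (q b).

Definition push (R : realType) (A B : finType) (f : A -> B) (p : A -> R) : B -> R :=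
  fun b => \sum_(a : A | f a == b) p a.

Definition is_pmf (R : realType) (A : finType) (p : A -> R) : Prop :=
  (forall a, 0 <= p a) /\ \sum_(a : A) p a = 1.

Section Info.
Variables (R : realType) (X Y : finType) (p : X * Y -> R).

Definition HXY : R := entropy p.
Definition HX : R := entropy (push fst p).
Definition HY : R := entropy (push snd p).
Definition HX_Y : R := HXY - HY.
Definition HY_X : R := HXY - HX.
Definition MI : R := HX + HY - HXY.

Definition char_rel : rel (X + Y) :=
  fun a b => match a, b with
             | inl x, inr y => 0 < p (x, y)
             | inr y, inl x => 0 < p (x, y)
             | _, _ => false
             end.

(* Gacs-Korner common part: index (representative) of the connected
   component containing x (resp. y). *)
Definition GK_X (x : X) : X + Y := fingraph.root char_rel (inl x).
Definition GK_Y (y : Y) : X + Y := fingraph.root char_rel (inr y).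
Definition GK (xy : X * Y) : X + Y := GK_X xy.1.

Definition HK : R := entropy (push GK p).
Definition HXK : R := entropy (push (fun xy => (xy.1, GK xy)) p).
Definition HYK : R := entropy (push (fun xy => (xy.2, GK xy)) p).
Definition HX_K : R := HXK - HK.
Definition HY_K : R := HYK - HK.

End Info.

Definition dec_rate (R : realType) (X Y : finType) (p : X * Y -> R) (i : 'I_3) : R :=
  if i == iX' then HX_K p else if i == iY' then HY_K p else HK p.

Definition feasible_by_decomposition (R : realType) (V : finType)
    (c : V -> V -> nat) (sx sy : V) (T : {set V})
    (X Y : finType) (p : X * Y -> R) : Prop :=
  forall S : {set 'I_3}, S != finset.set0 ->
    ((\sum_(i in S) dec_rate p i)%:E <=
      ereal_inf [set mincut (exp_cap R c sx sy) (inr @: S) (inl t) | t in [set t | t \in T]])%E.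

(* Main.v *)
Require Import Defs.
From HB Require Import structures.
From mathcomp Require Import all_boot all_order all_algebra.
From mathcomp Require Import boolp classical_sets reals constructive_ereal ereal exp.
Import Order.TTheory GRing.Theory Num.Theory.
Local Open Scope classical_set_scope.
Local Open Scope ring_scope.

From mathcomp Require Import lra.
Section S.
Variable R : realType.

Lemma ln2_gt0' : 0 < ln (2 : R).
Proof. by apply: ln_gt0; rewrite ltr1n. Qed.

Lemma log2_le (x y : R) : 0 < x -> x <= y -> log2 x <= log2 y.
Proof.
move=> x0 xy; rewrite /log2 ler_pM2r ?invr_gt0 ?ln2_gt0' //.
by rewrite ler_ln // posrE (lt_le_trans x0).
Qed.

Lemma log2_le0 (x : R) : x <= 1 -> log2 x <= 0.
Proof.
move=> x1; rewrite /log2 mulr_le0_ge0 ?ln_le0 //.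
by rewrite invr_ge0 ltW // ln2_gt0'.
Qed.

Lemma push_comp (A B C : finType) (f : B -> C) (g : A -> B) (q : A -> R) :
  push f (push g q) =1 push (f \o g) q.
Proof.
move=> c; rewrite /push.
rewrite [RHS](@partition_big _ _ _ _ _ _ _ g (fun b => f b == c)) /=; last first.
  by [].
apply: eq_bigr => b /eqP fb; apply: eq_bigl => a.
rewrite andbC; have [gab|] := eqVneq (g a) b; last by [].
by rewrite gab fb eqxx.
Qed.

Lemma push_sum (A B : finType) (f : A -> B) (q : A -> R) :
  \sum_b push f q b = \sum_a q a.
Proof.
by rewrite [RHS](partition_big f xpredT).
Qed.

Lemma push_ge0 (A B : finType) (f : A -> B) (q : A -> R) :
  (forall a, 0 <= q a) -> forall b, 0 <= push f q b.
Proof. by move=> q0 b; apply: sumr_ge0. Qed.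

Lemma entropy_push_le (A B : finType) (f : A -> B) (q : A -> R) :
  (forall a, 0 <= q a) -> entropy (push f q) <= entropy q.
Proof.
move=> q0; rewrite /entropy lerN2.
have -> : \sum_b push f q b * log2 (push f q b) =
          \sum_a q a * log2 (push f q (f a)).
  rewrite [RHS](partition_big f xpredT) //=.
  apply: eq_bigr => b _; rewrite /push big_distrl /=.
  by apply: eq_bigr => a /eqP ->.
apply: ler_sum => a _.
have [qa0|qa0] := eqVneq (q a) 0; first by rewrite qa0 !mul0r.
have qpos : 0 < q a by rewrite lt_neqAle eq_sym qa0 q0.
rewrite ler_pM2l // log2_le //.
rewrite /push (bigD1 a) //= lerDl; apply: sumr_ge0 => *; exact: q0.
Qed.

Lemma entropy_ge0 (A : finType) (q : A -> R) :
  (forall a, 0 <= q a <= 1) -> 0 <= entropy q.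
Proof.
move=> q01; rewrite /entropy oppr_ge0; apply: sumr_le0 => a _.
case/andP: (q01 a) => h0 h1.
by rewrite mulr_ge0_le0 // log2_le0.
Qed.

Lemma pmf_le1 (A : finType) (q : A -> R) : is_pmf q -> forall a, 0 <= q a <= 1.
Proof.
case=> q0 q1 a; rewrite q0 /= -q1 (bigD1 a) //= lerDl.
by apply: sumr_ge0.
Qed.

Lemma push_pmf (A B : finType) (f : A -> B) (q : A -> R) :
  is_pmf q -> is_pmf (push f q).
Proof. by case=> q0 q1; split; [exact: push_ge0|rewrite push_sum]. Qed.

Lemma push_ext (A B : finType) (f g : A -> B) (q : A -> R) :
  (forall a, q a != 0 -> f a = g a) -> push f q =1 push g q.
Proof.
move=> fg b; rewrite /push [LHS]big_mkcond [RHS]big_mkcond /=.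
apply: eq_bigr => a _.
have [->|qa] := eqVneq (q a) 0; first by case: ifP; case: ifP.
by rewrite fg.
Qed.

Lemma entropy_ext (A : finType) (q q' : A -> R) : q =1 q' -> entropy q = entropy q'.
Proof. by move=> e; rewrite /entropy; congr (- _); apply: eq_bigr => a _; rewrite e. Qed.

End S.
Local Open Scope ereal_scope.
Section N.
Variables (R : realType) (V : finType) (c : V -> V -> nat) (sx sy : V).
Notation e := (exp_cap R c sx sy).

Lemma exp_cap_ge0 a b : 0 <= e a b.
Proof.
case: a => [u|i]; case: b => [v|j] //=; rewrite ?lee_fin //.
by case: ifP.
Qed.

Lemma cut_ge_term (S : {set V + 'I_3}) u w :
  u \in S -> w \in ~: S -> e u w <= cut_value e S.
Proof.
move=> uS wS; rewrite /cut_value (bigD1 u) //=.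
apply: le_trans (leeDl _ _); last by apply: sume_ge0 => *; apply: sume_ge0 => *; exact: exp_cap_ge0.
rewrite (bigD1 w) //=; apply: leeDl; apply: sume_ge0 => *; exact: exp_cap_ge0.
Qed.

Lemma cut_restrict (S : {set V + 'I_3}) :
  cut_value (ecap R c) [set v | inl v \in S] <= cut_value e S.
Proof.
rewrite /cut_value big_sumType.
apply: le_trans (leeDl _ _); last by apply: sume_ge0 => *; apply: sume_ge0 => *; exact: exp_cap_ge0.
rewrite [X in X <= _](eq_bigl (fun u => inl u \in S)); last by move=> u; rewrite inE.
apply: lee_sum => u _.
rewrite big_sumType.
apply: le_trans (leeDl _ _); last by apply: sume_ge0 => *; exact: exp_cap_ge0.
rewrite [X in X <= _](eq_bigl (fun v => inl v \in ~: S)); last by move=> v; rewrite !inE.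
by [].
Qed.

Lemma mincut_le (W : finType) (cc : W -> W -> \bar R) (A S : {set W}) (t : W) :
  A \subset S -> t \notin S -> mincut cc A t <= cut_value cc S.
Proof.
move=> AS tS; apply: ereal_inf_lbound; exists S => //.
by rewrite /= AS tS.
Qed.

Lemma key (B : {set V}) (S : {set 'I_3}) t :
  (forall v, v \in B -> exists2 i, i \in S & e (inr i) (inl v) = +oo) ->
  rho R c B t <= mincut e (inr @: S) (inl t).
Proof.
move=> reach; apply: le_ereal_inf_tmp => _ [S' /= + <-].
move=> /andP[sub tS'].
have [allin|] := pselect (forall v, v \in B -> inl v \in S'); last first.
  move=> /existsNP[v /not_implyP[vB vS']].
  have [i iS ei] := reach v vB.
  have : e (inr i) (inl v) <= cut_value e S'.
    apply: (@cut_ge_term S' (inr i) (inl v)).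
      by move/fintype.subsetP: sub; apply; apply/imsetP; exists i.
    by rewrite inE; apply/negP.
  by rewrite ei leye_eq => /eqP ->; apply: leey.
apply: le_trans (cut_restrict S').
apply: mincut_le; first by apply/fintype.subsetP => v vB; rewrite inE allin.
by rewrite inE.
Qed.

End N.
Local Close Scope ereal_scope.
Local Open Scope ring_scope.
Lemma ord3_cases (P : 'I_3 -> Prop) : P iX' -> P iY' -> P iK -> forall i, P i.
Proof.
move=> hX hY hK [[|[|[|n]]] Hi] //.
- by have -> : Ordinal Hi = iX' by apply: val_inj.
- by have -> : Ordinal Hi = iY' by apply: val_inj.
- by have -> : Ordinal Hi = iK by apply: val_inj.
Qed.

Section M.
Variables (R : realType) (V : finType) (c : V -> V -> nat) (sx sy : V).

Lemma ecX : exp_cap R c sx sy (inr iX') (inl sx) = +oo%E.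
Proof. by rewrite /exp_cap !eqxx. Qed.
Lemma ecY : exp_cap R c sx sy (inr iY') (inl sy) = +oo%E.
Proof. by rewrite /exp_cap !eqxx /= ?orbT ?andbT. Qed.
Lemma ecK1 : exp_cap R c sx sy (inr iK) (inl sx) = +oo%E.
Proof. by rewrite /exp_cap !eqxx /= ?orbT ?andbT. Qed.
Lemma ecK2 : exp_cap R c sx sy (inr iK) (inl sy) = +oo%E.
Proof. by rewrite /exp_cap !eqxx /= ?orbT ?andbT. Qed.
End M.

Section Main2.
Variables (R : realType) (X Y : finType) (p : X * Y -> R).
Hypothesis pmf : is_pmf p.

Lemma p_ge0 a : 0 <= p a. Proof. by case: pmf. Qed.

Lemma GK_supp x y : p (x, y) != 0 -> GK_X p x = GK_Y p y.
Proof.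
move=> nz; apply/eqP; rewrite /GK_X /GK_Y root_connect.
  apply: connect1 => /=; by rewrite lt_neqAle eq_sym nz p_ge0.
apply: sym_connect_sym => [[a|a] [b|b]] //.
Qed.

Lemma HX_le : HX p <= HXY p. Proof. exact: entropy_push_le p_ge0. Qed.
Lemma HY_le : HY p <= HXY p. Proof. exact: entropy_push_le p_ge0. Qed.
Lemma HK_ge0 : 0 <= HK p.
Proof. by apply: entropy_ge0; apply: pmf_le1; apply: push_pmf. Qed.

Lemma HXK_eq : HXK p = HX p.
Proof.
pose g x := (x, GK_X p x).
have e1 : HXK p = entropy (push g (push fst p)).
  by apply: entropy_ext => b; rewrite push_comp.
apply/eqP; rewrite eq_le; apply/andP; split.
  by rewrite e1; apply: entropy_push_le; apply: push_ge0; exact: p_ge0.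
have -> : HX p = entropy (push fst (push (g \o fst) p)).
  by apply: entropy_ext => b; rewrite push_comp.
by apply: entropy_push_le; apply: push_ge0; exact: p_ge0.
Qed.

Lemma HYK_eq : HYK p = HY p.
Proof.
pose g y := (y, GK_Y p y).
have e0 : HYK p = entropy (push (g \o snd) p).
  apply: entropy_ext; apply: push_ext => [[x y]] nz /=.
  by rewrite /g /GK /= (@GK_supp x y nz).
have e1 : HYK p = entropy (push g (push snd p)).
  by rewrite e0; apply: entropy_ext => b; rewrite push_comp.
apply/eqP; rewrite eq_le; apply/andP; split.
  by rewrite e1; apply: entropy_push_le; apply: push_ge0; exact: p_ge0.
have -> : HY p = entropy (push fst (push (g \o snd) p)).
  by apply: entropy_ext => b; rewrite push_comp.
by rewrite e0; apply: entropy_push_le; apply: push_ge0; exact: p_ge0.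
Qed.

End Main2.

Theorem corollary2 (R : realType) (V : finType) (c : V -> V -> nat)
    (sx sy : V) (T : {set V}) (X Y : finType) (p : X * Y -> R) :
  acyclic c -> sx != sy -> is_pmf p ->
  HK p = MI p ->
  ((HX_Y p)%:E <= rhoG R c T [set sx])%E ->
  ((HY_X p)%:E <= rhoG R c T [set sy])%E ->
  ((HXY p)%:E <= rhoG R c T [set sx; sy])%E ->
  feasible_by_decomposition c sx sy T p.
Proof.
move=> _ _ pmf hK hX hY hXY S S0.
have hx := @HX_le _ _ _ _ pmf; have hy := @HY_le _ _ _ _ pmf; have hk0 := @HK_ge0 _ _ _ _ pmf.
have hxk := @HXK_eq _ _ _ _ pmf; have hyk := @HYK_eq _ _ _ _ pmf.
have dX : dec_rate p iX' = HX_Y p.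
  rewrite /dec_rate eqxx /HX_K hxk hK /MI /HX_Y; lra.
have dY : dec_rate p iY' = HY_X p.
  rewrite /dec_rate /= /HY_K hyk hK /MI /HY_X; lra.
have dK : dec_rate p iK = HK p by rewrite /dec_rate.
have dge0 : forall i, 0 <= dec_rate p i.
  apply: ord3_cases; rewrite ?dX ?dY ?dK // /HX_Y /HY_X; lra.
have tot : \sum_i dec_rate p i = HXY p.
  rewrite (bigD1 iX') // (bigD1 iY') // (bigD1 iK) // big_pred0; last first.
    by move=> i; move: i; apply: ord3_cases.
  rewrite dX dY dK /HX_Y /HY_X hK /MI; rewrite /= addr0; lra.
have sumle : \sum_(i in S) dec_rate p i <= HXY p.
  rewrite -tot [X in X <= _]big_mkcond /=; apply: ler_sum => i _.
  by case: ifP => // _; exact: dge0.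
apply: le_ereal_inf_tmp => _ [t tT <-].
have fin : forall (B : {set V}) r, (r%:E <= rhoG R c T B)%E ->
   (forall v, v \in B -> exists2 i, i \in S & exp_cap R c sx sy (inr i) (inl v) = +oo%E) ->
   (r%:E <= mincut (exp_cap R c sx sy) (inr @: S) (inl t))%E.
  move=> B r hr reach; apply: le_trans hr _; apply: le_trans (@key _ _ _ _ _ B S t reach).
  by apply: ereal_inf_lbound; exists t.
have [SX|nSX] := eqVneq S [set iX']%SET.
  have -> : \sum_(i in S) dec_rate p i = HX_Y p by rewrite SX big_set1.
  apply: fin hX _ => v; rewrite inE => /eqP ->.
  by exists iX'; [rewrite SX inE|exact: ecX].
have [SY|nSY] := eqVneq S [set iY']%SET.
  have -> : \sum_(i in S) dec_rate p i = HY_X p by rewrite SY big_set1.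
  apply: fin hY _ => v; rewrite inE => /eqP ->.
  by exists iY'; [rewrite SY inE|exact: ecY].
have hXs : (iX' \in S) || (iK \in S).
  case hXs: (iX' \in S); case hKs: (iK \in S) => //.
  case hYs: (iY' \in S).
    move/eqP: nSY; case; apply/setP; apply: ord3_cases; by rewrite !inE ?hXs ?hKs ?hYs.
  move/eqP: S0; case; apply/setP; apply: ord3_cases; by rewrite !inE ?hXs ?hKs ?hYs.
have hYs : (iY' \in S) || (iK \in S).
  case hYs: (iY' \in S); case hKs: (iK \in S) => //.
  case hXs': (iX' \in S).
    move/eqP: nSX; case; apply/setP; apply: ord3_cases; by rewrite !inE ?hXs' ?hKs ?hYs.
  move/eqP: S0; case; apply/setP; apply: ord3_cases; by rewrite !inE ?hXs' ?hKs ?hYs.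
apply: fin (le_trans _ hXY) _; first by rewrite lee_fin.
move=> v; rewrite !inE => /orP[/eqP ->|/eqP ->].
  by case/orP: hXs => h; [exists iX'; [|exact: ecX]|exists iK; [|exact: ecK1]].
by case/orP: hYs => h; [exists iY'; [|exact: ecY]|exists iK; [|exact: ecK2]].
Qed.
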